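(* Let $p$ be a prime, let $\Gamma\subsetneq\mathbb{F}_p^*$ be a proper multiplicative subgroup, and let $A,B\subseteq\mathbb{F}_p$ be two sets with $A+B\subseteq\Gamma\sqcup\{0\}$. Then $|A||B|<4p$. *)

(* Defs.v *)
From mathcomp Require Import all_boot all_algebra all_fingroup.
Set Implicit Arguments. Unset Strict Implicit. Unset Printing Implicit Defensive.

(* Main.v *)
Require Import Defs.
From mathcomp Require Import all_boot all_algebra all_fingroup.
From mathcomp Require Import zify ring.
Lemma cs_seq (I : Type) (r : seq I) (c : I -> nat) :
  ((\sum_(i <- r) c i) ^ 2 <= size r * \sum_(i <- r) c i ^ 2)%N.
Proof.
elim: r => [|x r IH]; first by rewrite !big_nil.
rewrite !big_cons /=.
move: IH; set S := \sum_(i <- r) c i; set Q := \sum_(i <- r) c i ^ 2.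
set n := size r; set a := c x => IH.
have H: (2 * a * S * n <= n * (n * a ^ 2 + Q))%N.
  have h2 : (2 * (n * a) * S <= (n*a)^2 + S^2)%N.
    case: (leqP (n*a) S) => h.
    - have [k ->] : exists k, S = n * a + k by exists (S - n*a); lia.
      nia.
    - have [k ->] : exists k, n * a = S + k by exists (n*a - S); lia.
      nia.
  nia.
case: n H IH => [|n] H IH.
  have -> : S = 0%N by nia.
  nia.
nia.
Qed.
Lemma cs_fiber (T I : finType) (B : {set T}) (c : pred T) (R : {set I}) (f : T -> I) :
 (forall s, c s -> f s \in R) ->
 ((\sum_(b in B) (c b : nat)) ^ 2 <=
   #|R| * \sum_(b in B) \sum_(b' in B) (c b && c b' && (f b == f b') : nat))%N.
Proof.
move=> hf.
set cnt := fun i => \sum_(b in B) (c b && (f b == i) : nat).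
have E1 : \sum_(b in B) (c b : nat) = \sum_(i in R) cnt i.
  rewrite /cnt exchange_big /=; apply: eq_bigr => b _.
  case cb: (c b) => /=; last by rewrite big1.
  rewrite (bigD1 (f b)) ?hf // eqxx big1 // => i /andP[_ ne].
  by rewrite eq_sym (negbTE ne).
have E2 : \sum_(b in B) \sum_(b' in B) (c b && c b' && (f b == f b') : nat)
   = \sum_(i in R) cnt i ^ 2.
  transitivity (\sum_(b in B) \sum_(b' in B) \sum_(i in R)
     ((c b && (f b == i)) * (c b' && (f b' == i)))%N).
    apply: eq_bigr => b _; apply: eq_bigr => b' _.
    case cb: (c b); case cb': (c b') => /=;
      try by rewrite big1 // => i _; rewrite ?mul0n ?muln0.
    rewrite (bigD1 (f b)) ?hf //= eqxx mul1n big1 ?addn0 1?eq_sym // => i /andP[_ ne].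
    by rewrite eq_sym (negbTE ne) mul0n.
  under eq_bigr do rewrite exchange_big.
  rewrite exchange_big; apply: eq_bigr => i _.
  rewrite /cnt expnS expn1 big_distrl; apply: eq_bigr => b _.
  by rewrite big_distrr.
rewrite E1 E2.
have := @cs_seq _ (enum R) cnt.
by rewrite -cardE !big_enum.
Qed.
Lemma ar1 d SA PA MA B p : (2 <= d -> MA <= d*PA -> d*(SA+PA) <= SA + MA + B*((d-1)*p) -> SA <= B*p)%N.
Proof.
move=> hd h1 h2.
have h4 : ((d - 1) * SA <= (d - 1) * (B * p))%N.
  rewrite mulnDr in h2.
  have e : d = ((d-1) + 1)%N by lia.
  move: h2; rewrite {1 2}e !mulnDl !mul1n => h2.
  rewrite mulnCA; lia.
by move: h4; rewrite leq_pmul2l // subn_gt0.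
Qed.
Lemma ar2 a b p : (2 <= p -> a <= p -> a*(b-1)^2 <= b*p -> a*b < 4*p)%N.
Proof.
move=> hp ha h.
case: (leqP b 2) => hb.
  have : (a * b <= p * 2)%N by apply: leq_mul.
  lia.
case: a ha h => [|a] ha h; first lia.
move: h; have [c ->] : exists c, b = (c + 3)%N by exists (b - 3)%N; lia.
have e3 : (c + 3 - 1 = c + 2)%N by lia.
rewrite -mulnn e3 => h.
have h1 : (a.+1 * (c + 3) * (c + 3) < 4 * p * (c + 3))%N.
  have h2 : ((c + 3) * (c + 3) < 4 * ((c + 2) * (c + 2)))%N by nia.
  have h3 : (a.+1 * ((c + 3) * (c + 3)) < a.+1 * (4 * ((c + 2) * (c + 2))))%N.
    by rewrite ltn_pmul2l.
  nia.
by move: h1; rewrite ltn_pmul2r // addn3.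
Qed.

Lemma sum_sub (T : finType) (B : pred T) (F : T -> nat) :
  (\sum_(b in B) F b <= \sum_b F b)%N.
Proof. by rewrite big_mkcond; apply: leq_sum => i _; case: ifP. Qed.

Lemma sum_subS (T : finType) (B : {set T}) (F : T -> nat) :
  (\sum_(b in B) F b <= \sum_b F b)%N.
Proof. by rewrite big_mkcond; apply: leq_sum => i _; case: ifP. Qed.

Lemma sum_eq1 (T : finType) (y : T) : (\sum_(x : T) (x == y) : nat) = 1%N.
Proof.
by rewrite (bigD1 y) //= eqxx big1 ?addn0 // => x /negbTE ->.
Qed.

Lemma sum_bool_card (T : finType) (P : pred T) :
  (\sum_(x : T) (P x : nat)) = #|[set x | P x]|.
Proof. by rewrite -sum1dep_card [RHS]big_mkcond; apply: eq_bigr => x _; case: (P x). Qed.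

Lemma aux_ar (d X Y p : nat) : (1 <= d -> X <= Y -> X <= p -> d * X <= Y + (d - 1) * p)%N.
Proof.
case: d => // d _ hXY hXp; rewrite subSS subn0 mulSn.
by apply: leq_add => //; apply: leq_mul.
Qed.

Import GRing.Theory.
Local Open Scope ring_scope.

Theorem lemma5 (p : nat) (hp : prime p)
  (Gamma : {group {unit 'F_p}})
  (hG : Gamma \proper [set: {unit 'F_p}])
  (A B : {set 'F_p})
  (hAB : forall a b, a \in A -> b \in B ->
     a + b = 0 \/ exists2 u : {unit 'F_p}, u \in Gamma & val u = a + b) :
  (#|A| * #|B| < 4 * p)%N.
Proof.
pose u0 : {unit 'F_p} := 1%g.
pose cP x b b' := [&& x + b != 0, x + b' != 0 & insubd u0 ((x + b) / (x + b')) \in Gamma].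
pose cM (x b b' : 'F_p) := (x + b != 0) && (x + b' != 0).
pose d := #|[set: {unit 'F_p}] : Gamma|%g.
pose P x := (\sum_(b in B) \sum_(b' in B) (cP x b b' : nat))%N.
pose M x := (\sum_(b in B) \sum_(b' in B) (cM x b b' : nat))%N.
have hp1 : (1 < p)%N by apply: prime_gt1.
have cFp : #|'F_p| = p by apply: card_Fp.
have hd : (#|Gamma| * d)%N = p.-1.
  by rewrite /d Lagrange ?subsetT // card_finField_unit cFp.
have hd2 : (2 <= d)%N.
  have := proper_card hG; rewrite card_finField_unit cFp -hd.
  move=> h; case: (leqP 2 d) => // h2; nia.
have hU : forall y z : 'F_p, y != 0 -> z != 0 ->
    insubd u0 (y / z) = (insubd u0 y * (insubd u0 z)^-1)%g.
  move=> y z hy hz; apply: val_inj.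
  rewrite FinRing.val_unitM FinRing.val_unitV !insubdK //;
    by rewrite ?unitfE ?mulf_neq0 ?invr_eq0.
have hMsq : forall x, M x = ((\sum_(b in B) ((x + b != 0)%R : nat)) ^ 2)%N.
  move=> x; rewrite /M expnS expn1 big_distrl; apply: eq_bigr => b _.
  by rewrite big_distrr; apply: eq_bigr => b' _ /=; rewrite /cM mulnb.
have stepA : forall x, (M x <= d * P x)%N.
  move=> x; rewrite hMsq.
  have := @cs_fiber _ _ B (fun b => x + b != 0)
    (rcosets Gamma [set: {unit 'F_p}]) (fun b => (Gamma :* insubd u0 (x + b))%g).
  have hf : forall s, x + s != 0 -> (Gamma :* insubd u0 (x + s))%g \in rcosets Gamma [set: {unit 'F_p}].
    by move=> s _; apply/rcosetsP; exists (insubd u0 (x + s)); rewrite ?in_setT.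
  move=> /(_ hf).
  have -> : \sum_(b in B) \sum_(b' in B)
     ((x + b != 0) && (x + b' != 0) &&
     ((Gamma :* insubd u0 (x + b))%g == (Gamma :* insubd u0 (x + b'))%g) : nat)
     = P x.
    apply: eq_bigr => b _; apply: eq_bigr => b' _.
    rewrite /cP; case hb: (x + b != 0); case hb': (x + b' != 0) => //=.
    rewrite hU //; congr nat_of_bool; apply/eqP/idP.
      by move/rcoset_eqP; rewrite mem_rcoset.
    by move=> h; apply/rcoset_eqP; rewrite mem_rcoset.
  by [].
have hpd : (#|Gamma| * d + 1 = p)%N by rewrite hd addn1 prednK // ltnW.
have stepB : forall b b', (d * \sum_x (cP x b b' : nat)
     <= \sum_x (cM x b b' : nat) + (d - 1) * p * (b == b'))%N.
  move=> b b'; case: (eqVneq b b') => [<-|ne].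
    have h1 : (\sum_x (cP x b b : nat) <= \sum_x (cM x b b : nat))%N.
      apply: leq_sum => x _; rewrite /cP /cM.
      by case: (x + b != 0); case: (insubd _ _ \in Gamma).
    have h2 : (\sum_x (cP x b b : nat) <= p)%N.
      rewrite -[X in (_ <= X)%N]cFp -sum1_card; apply: leq_sum => x _; apply: leq_b1.
    by rewrite /= muln1; apply: aux_ar => //; apply: ltnW.
  rewrite muln0 addn0.
  have hM : (p <= \sum_x (cM x b b' : nat) + 2)%N.
    have : (\sum_(x : 'F_p) 1 <= \sum_x ((cM x b b' : nat) + (x == -b) + (x == -b')))%N.
      apply: leq_sum => x _; rewrite /cM !addr_eq0.
      by case: (x == -b); case: (x == -b').
    by rewrite !big_split /= !sum_eq1 sum1_card cFp -addnA.
  have hP : (\sum_x (cP x b b' : nat) <= #|Gamma| - 1)%N.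
    rewrite sum_bool_card.
    pose g x := insubd u0 ((x + b) / (x + b')).
    rewrite -(@card_in_imset _ _ g); last first.
      move=> x y; rewrite !inE /cP => /and3P[hx1 hx2 _] /and3P[hy1 hy2 _] hxy; move: (congr1 val hxy); rewrite /g.
      rewrite !insubdK ?unitfE ?mulf_neq0 ?invr_eq0 // => /eqP.
      rewrite eqr_div // => /eqP e2.
      have h : (x - y) * (b' - b) = (x + b) * (y + b') - (y + b) * (x + b') by ring.
      move: h; rewrite e2 subrr => /eqP; rewrite mulf_eq0 !subr_eq0 => /orP[/eqP //|].
      by rewrite eq_sym (negbTE ne).
    rewrite [X in (_ <= X - 1)%N](cardsD1 1%g) group1 add1n subn1 /=.
    apply: subset_leq_card; apply/subsetP => y /imsetP[x]; rewrite inE /cP.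
    move=> /and3P[h1 h2 h3] ->; rewrite !inE h3 andbT.
    apply/eqP => /(congr1 val); rewrite insubdK ?unitfE ?mulf_neq0 ?invr_eq0 //=.
    move/(congr1 (fun t => t * (x + b'))); rewrite divfK // mul1r => /addrI.
    by move/eqP; rewrite (negbTE ne).
  nia.
have stepC : forall a, a \in A -> P a = M a.
  move=> a hA; apply: eq_bigr => b hb; apply: eq_bigr => b' hb'.
  rewrite /cP /cM; case h1: (a + b != 0); case h2: (a + b' != 0) => //=.
  suff -> : insubd u0 ((a + b) / (a + b')) \in Gamma by [].
  case: (hAB a b hA hb) => [e|[u hu eu]]; first by rewrite e eqxx in h1.
  case: (hAB a b' hA hb') => [e|[u' hu' eu']]; first by rewrite e eqxx in h2.
  by rewrite hU ?h1 ?h2 // -eu -eu' !valKd groupM ?groupV.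
have stepD : forall a, a \in A -> ((#|B| - 1) ^ 2 <= M a)%N.
  move=> a hA; rewrite hMsq.
  have hs : (#|B| - 1 <= \sum_(b in B) ((a + b != 0)%R : nat))%N.
    have : (#|B| <= \sum_(b in B) (((a + b != 0)%R : nat) + (b == -a)))%N.
      rewrite -sum1_card; apply: leq_sum => b _; rewrite addrC addr_eq0.
      by case: (b == -a).
    rewrite big_split /=; have := @sum_subS _ B (fun b => (b == -a : nat)); rewrite sum_eq1.
    move=> hh1 hh2; rewrite leq_subLR addnC; apply: (leq_trans hh2); exact: leq_add.
  by rewrite -!mulnn; apply: leq_mul.
have hsplit : forall F : 'F_p -> nat,
    (\sum_x F x = \sum_(x in A) F x + \sum_(x in ~: A) F x)%N.
  move=> F; rewrite (bigID (fun x => x \in A)) /=; congr (_ + _).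
  by apply: eq_bigl => x; rewrite ?inE.
have h3 : (d * \sum_x P x <= \sum_x M x + #|B| * ((d - 1) * p))%N.
  have eP : \sum_x P x = \sum_(b in B) \sum_(b' in B) \sum_x (cP x b b' : nat).
    by rewrite /P exchange_big /=; apply: eq_bigr => b _; rewrite exchange_big.
  have eM : \sum_x M x = \sum_(b in B) \sum_(b' in B) \sum_x (cM x b b' : nat).
    by rewrite /M exchange_big /=; apply: eq_bigr => b _; rewrite exchange_big.
  rewrite eP eM big_distrr /=.
  have : (\sum_(b in B) d * \sum_(b' in B) \sum_x (cP x b b' : nat) <=
     \sum_(b in B) \sum_(b' in B) (\sum_x (cM x b b' : nat) + (d - 1) * p * (b == b')))%N.
    apply: leq_sum => b _; rewrite big_distrr; apply: leq_sum => b' _; exact: stepB.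
  move/leq_trans; apply.
  rewrite [X in (X <= _)%N](_ : _ =
     \sum_(b in B) (\sum_(b' in B) \sum_x (cM x b b' : nat) + (d - 1) * p))%N; last first.
    apply: eq_bigr => b hb; rewrite big_split /=; congr (_ + _).
    rewrite (bigD1 b) //= eqxx muln1 big1 ?addn0 // => b' /andP[_ ne].
    by rewrite eq_sym (negbTE ne) muln0.
  by rewrite big_split /= sum_nat_const.
have hSA : (#|A| * (#|B| - 1) ^ 2 <= \sum_(x in A) P x)%N.
  rewrite -sum_nat_const; apply: leq_sum => a ha; rewrite stepC //; exact: stepD.
have hMA : (\sum_(x in A) M x = \sum_(x in A) P x)%N.
  by apply: eq_bigr => a ha; rewrite stepC.
have hMA' : (\sum_(x in ~: A) M x <= d * \sum_(x in ~: A) P x)%N.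
  by rewrite big_distrr; apply: leq_sum => x _; apply: stepA.
have hAp : (#|A| <= p)%N by have := max_card A; rewrite cFp.
move: h3; rewrite (hsplit P) (hsplit M) hMA => h3.
have h5 : (\sum_(x in A) P x <= #|B| * p)%N by apply: (ar1 _ _ _ _ _ _ hd2 hMA' h3).
apply: (ar2 _ _ _ _ hAp) => //; exact: leq_trans hSA h5.
Qed.
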